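(* Let $n>m\geq 0$ be integers and $\gamma$ a real number, and let $G^{\gamma}_{mn}$ be Budak's function. Then for all real $\omega$, $$|G^{\gamma}_{mn}(j\omega)|^2=\left[\frac{(2n)!}{(2m)!}\right]^2\frac{m!}{n!}\cdot\frac{\sum_{i=0}^{m}\binom{m}{i}\frac{(2i)!}{i!}(m+i)!\,[2(\gamma-1)\omega]^{2(m-i)}}{\sum_{k=0}^{n}\binom{n}{k}\frac{(2k)!}{k!}(n+k)!\,(2\gamma\omega)^{2(n-k)}}.$$
   Context: Generalized Bessel polynomials: $B_n(s,\alpha,\beta)=\sum_{k=0}^{n}\binom{n}{k}\frac{(n+k+\alpha-2)^{(k)}}{\beta^k}s^{n-k}$, with $(q)^{(k)}=q(q-1)\cdots(q-k+1)$, $(q)^{(0)}=1$; in particular $B_n(s,2,1)=\sum_{k=0}^n\binom{n}{k}\frac{(n+k)!}{n!}s^{n-k}$. Budak's function is $$G^{\gamma}_{mn}(s)=K\,\frac{B_m(2(\gamma-1)s,2,1)}{B_n(2\gamma s,2,1)},\qquad K=\frac{B_n(0,2,1)}{B_m(0,2,1)},$$ so that $G^{\gamma}_{mn}(0)=1$. *)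

(* Defs.v *)
(* complex numbers are modelled by an arbitrary
   numClosedFieldType C (e.g. algC); "real" means x \is Num.real. *)
From HB Require Import structures.
From mathcomp Require Import all_boot all_order all_algebra.
Set Implicit Arguments. Unset Strict Implicit. Unset Printing Implicit Defensive.
Import Order.TTheory GRing.Theory Num.Theory.
Local Open Scope ring_scope.

Definition ffact {R : pzRingType} (q : R) (k : nat) : R :=
  \prod_(i < k) (q - i%:R).

Definition besselB {R : fieldType} (n : nat) (s alpha beta : R) : R :=
  \sum_(k < n.+1) 'C(n, k)%:R * (ffact (n%:R + k%:R + alpha - 2%:R) k / beta ^+ k)
                  * s ^+ (n - k).

Definition budakG {R : fieldType} (gamma : R) (m n : nat) (s : R) : R :=
  (besselB n 0 2%:R 1 / besselB m 0 2%:R 1)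
  * (besselB m (2%:R * (gamma - 1) * s) 2%:R 1 / besselB n (2%:R * gamma * s) 2%:R 1).

(* Main.v *)
Require Import Defs.
From HB Require Import structures.
From mathcomp Require Import all_boot all_order all_algebra.
From mathcomp Require Import ring zify.
Import Order.TTheory GRing.Theory Num.Theory.
Set Implicit Arguments. Unset Strict Implicit.
Local Open Scope ring_scope.

Lemma pD1 (C : numClosedFieldType) (x y : C) : 0 < x -> 0 <= y -> 0 < x + y.
Proof. by move=> hx hy; rewrite addrC; apply: ltr_wpDl. Qed.
Lemma pD2 (C : numClosedFieldType) (x y : C) : 0 <= x -> 0 < y -> 0 < x + y.
Proof. by move=> hx hy; apply: ltr_wpDl. Qed.
Lemma fact_pos (C : numClosedFieldType) n : 0 < (n`!%:R : C).
Proof. by rewrite ltr0n fact_gt0. Qed.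

Ltac nn := first [ apply: ler0n | apply: ler01 | apply: addr_ge0; nn | apply: mulr_ge0; nn
  | apply: exprn_ge0; nn | apply: ltW; apply: fact_pos ].
Ltac pos := first [ apply: ltr01 | apply: fact_pos | (rewrite ltr0n; done)
  | apply: mulr_gt0; pos | apply: exprn_gt0; pos | apply: pD1; [pos|nn] | apply: pD2; [nn|pos] ].
Ltac nzs := rewrite ?andbT; repeat (apply/andP; split); first [done | apply: lt0r_neq0; pos].

Definition bc {C : numClosedFieldType} (n i : nat) : C :=
  if (i <= n)%N then (2*n-i)`!%:R / ((n-i)`!%:R * i`!%:R) else 0.
Definition bpoly {C : numClosedFieldType} (n : nat) : {poly C} := \poly_(i < n.+1) bc n i.

Lemma bcE (C : numClosedFieldType) n j k : n = (j + k)%N ->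
  (bc n j : C) = (j + 2*k)`!%:R / (k`!%:R * j`!%:R).
Proof.
move=> ->; rewrite /bc leq_addr.
have -> : (2*(j+k) - j = j + 2*k)%N by lia.
by have -> : (j+k-j = k)%N by lia.
Qed.
Lemma bc0 (C : numClosedFieldType) n i : (n < i)%N -> (bc n i : C) = 0.
Proof. by rewrite /bc ltnNge => /negbTE ->. Qed.
Arguments bc0 {C n i}. Arguments bcE {C n j k}.
Lemma coef_bpoly (C : numClosedFieldType) n i : (bpoly n : {poly C})`_i = bc n i.
Proof. rewrite coef_poly ltnS; case: leqP => // h; by rewrite bc0. Qed.

Lemma bpoly_rec (C : numClosedFieldType) n :
  (bpoly n.+2 : {poly C}) = (2*(2*n+3))%:R *: bpoly n.+1 + 'X^2 * bpoly n.
Proof.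
apply/polyP => i; rewrite coefD coefZ coefXnM !coef_bpoly.
case: (ltnP n.+2 i) => [lt|le].
  rewrite (bc0 lt) (@bc0 _ n.+1 i) ?mulr0 ?add0r; last lia.
  by case: ifP => // _; rewrite bc0 //; lia.
have [->|ne] := eqVneq i n.+2.
  rewrite (bcE (k:=0)) ?addn0 // bc0 //.
  have -> : (n.+2 - 2 = n)%N by lia.
  by rewrite /= (bcE (k:=0)) ?addn0 // mulr0 add0r; field; nzs.
have lt' : (i < n.+2)%N by rewrite ltn_neqAle ne le.
have [k ek] : exists k, n.+1 = (i + k)%N by exists (n.+1 - i)%N; lia.
case: i ek {le ne lt'} => [|[|i]] ek /=.
- rewrite (bcE (k:=n.+2)) // (bcE (k:=n.+1)) // addr0.
  have -> : (0 + 2 * n.+2 = (2*n).+4)%N by lia.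
  have -> : (0 + 2 * n.+1 = (2*n).+2)%N by lia.
  by rewrite !factS; field; nzs.
- have ekn : k = n by lia. subst k.
  rewrite (bcE (k:=n.+1)) // (bcE (k:=n)) // addr0.
  have -> : (1 + 2 * n.+1 = (2*n).+3)%N by lia.
  have -> : (1 + 2 * n = (2*n).+1)%N by lia.
  by rewrite !factS; field; nzs.
- have en : n = (i + k).+1 by lia. subst n.
  have -> : (i.+2 - 2 = i)%N by lia.
  rewrite (bcE (k:=k.+1)); last lia.
  rewrite (bcE (k:=k)); last lia.
  rewrite (bcE (k:=k.+1)); last lia.
  have -> : (i.+2 + 2 * k.+1 = (i + 2*k).+4)%N by lia.
  have -> : (i.+2 + 2 * k = (i + 2*k).+2)%N by lia.
  have -> : (i + 2 * k.+1 = (i + 2*k).+2)%N by lia.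
  by rewrite !factS; field; nzs.
Qed.

Definition rc {C : numClosedFieldType} (n j : nat) : C :=
  if (j <= n)%N then ((2*n-2*j)`!%:R * (2*n-j)`!%:R) / ((n-j)`!%:R ^+ 2 * j`!%:R) else 0.
Definition rp {C : numClosedFieldType} (n : nat) : {poly C} := \poly_(j < n.+1) rc n j.

Lemma rcE (C : numClosedFieldType) n j k : n = (j + k)%N ->
  (rc n j : C) = ((2*k)`!%:R * (j + 2*k)`!%:R) / (k`!%:R ^+ 2 * j`!%:R).
Proof.
move=> ->; rewrite /rc leq_addr.
have -> : (2*(j+k) - j = j + 2*k)%N by lia.
have -> : (2*(j+k) - 2*j = 2*k)%N by lia.
by have -> : (j+k-j = k)%N by lia.
Qed.
Lemma rc0 (C : numClosedFieldType) n i : (n < i)%N -> (rc n i : C) = 0.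
Proof. by rewrite /rc ltnNge => /negbTE ->. Qed.
Arguments rc0 {C n i}. Arguments rcE {C n j k}.
Lemma coef_rp (C : numClosedFieldType) n i : (rp n : {poly C})`_i = rc n i.
Proof. rewrite coef_poly ltnS; case: leqP => // h; by rewrite rc0. Qed.

Lemma rp_derivrec (C : numClosedFieldType) n :
  (rp n.+2 : {poly C})^`() = (2*n+3)%:R *: rp n.+1 - 'X * (rp n.+1)^`().
Proof.
apply/polyP => j; rewrite coefB coefZ coefXM !coef_deriv !coef_rp.
case: (ltnP n.+1 j) => [lt|le].
  rewrite (@rc0 _ n.+2 j.+1) ?(rc0 lt) ?mul0rn ?mulr0 ?sub0r; last lia.
  case: eqP => [_|ne]; first by rewrite oppr0.
  by rewrite prednK ?lt0n ?rc0 ?mul0rn ?oppr0 //; lia.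
have [->|ne] := eqVneq j n.+1.
  rewrite /= (rcE (k:=0)) ?addn0 // (rcE (k:=0)) ?addn0 //.
  by rewrite !factS; field; nzs.
have [k ek] : exists k, n = (j + k)%N by exists (n - j)%N; move: ne le; case: eqP => //; lia.
case: j ek {le ne} => [|j] ek /=.
- rewrite (rcE (k:=n.+1)) // (rcE (k:=n.+1)) // subr0.
  have -> : (1 + 2 * n.+1 = (2*n).+3)%N by lia.
  have -> : (0 + 2 * n.+1 = (2*n).+2)%N by lia.
  have -> : (2 * n.+1 = (2*n).+2)%N by lia.
  by rewrite !factS; field; nzs.
- subst n.
  rewrite (rcE (k:=k.+1)); last lia.
  rewrite (rcE (k:=k.+1)); last lia.
  have -> : (j.+2 + 2 * k.+1 = (j + 2*k).+4)%N by lia.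
  have -> : (j.+1 + 2 * k.+1 = (j + 2*k).+3)%N by lia.
  have -> : (2 * k.+1 = (2*k).+2)%N by lia.
  by rewrite !factS; field; nzs.
Qed.

Lemma rp_rec (C : numClosedFieldType) n :
  (rp n.+2 : {poly C}) = ((2*(2*n+3))^2)%:R *: rp n.+1
     - (4*(2*(2*n+3)))%:R *: ('X * (rp n.+1)^`()) + 'X^2 * rp n.
Proof.
apply/polyP => j; rewrite coefD coefB !coefZ coefXM coefXnM coef_deriv !coef_rp.
case: (ltnP n.+2 j) => [lt|le].
  rewrite (rc0 lt) (@rc0 _ n.+1 j) ?mulr0 ?sub0r; last lia.
  case: eqP => [_|ne]; first by rewrite mulr0 oppr0 add0r; case: ifP => // _; rewrite rc0 //; lia.
  rewrite prednK ?lt0n; last by apply/eqP.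
  rewrite (@rc0 _ n.+1 j) ?mul0rn ?mulr0 ?oppr0 ?add0r; last lia.
  by case: ifP => // _; rewrite rc0 //; lia.
have [->|ne] := eqVneq j n.+2.
  rewrite (rcE (k:=0)) ?addn0 // (@rc0 _ n.+1 n.+2) // /=.
  have -> : (n.+2 - 2 = n)%N by lia.
  rewrite (rcE (k:=0)) ?addn0 //.
  by rewrite !factS; field; nzs.
have lt' : (j < n.+2)%N by rewrite ltn_neqAle ne le.
have [k ek] : exists k, n.+1 = (j + k)%N by exists (n.+1 - j)%N; lia.
case: j ek {le ne lt'} => [|[|j]] ek /=.
- rewrite (rcE (k:=n.+2)) // (rcE (k:=n.+1)) // mulr0 subr0 addr0.
  have -> : (0 + 2 * n.+2 = (2*n).+4)%N by lia.
  have -> : (0 + 2 * n.+1 = (2*n).+2)%N by lia.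
  have -> : (2 * n.+2 = (2*n).+4)%N by lia.
  have -> : (2 * n.+1 = (2*n).+2)%N by lia.
  by rewrite !factS; field; nzs.
- have ekn : k = n by lia. subst k.
  rewrite (rcE (k:=n.+1)) // (rcE (k:=n)) // addr0.
  have -> : (1 + 2 * n.+1 = (2*n).+3)%N by lia.
  have -> : (1 + 2 * n = (2*n).+1)%N by lia.
  have -> : (2 * n.+1 = (2*n).+2)%N by lia.
  by rewrite !factS; field; nzs.
- have en : n = (j + k).+1 by lia. subst n.
  have -> : (j.+2 - 2 = j)%N by lia.
  rewrite (rcE (k:=k.+1)); last lia.
  rewrite (rcE (k:=k)); last lia.
  rewrite (rcE (k:=k.+1)); last lia.
  have -> : (j.+2 + 2 * k.+1 = (j + 2*k).+4)%N by lia.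
  have -> : (j.+2 + 2 * k = (j + 2*k).+2)%N by lia.
  have -> : (j + 2 * k.+1 = (j + 2*k).+2)%N by lia.
  have -> : (2 * k.+1 = (2*k).+2)%N by lia.
  by rewrite !factS; field; nzs.
Qed.
Lemma bp0 (C : numClosedFieldType) : (bpoly 0 : {poly C}) = 1.
Proof. apply/polyP => j; rewrite coef_bpoly coef1; case: j => [|j] /=.
  by rewrite /bc /= !fact0; field; nzs.
by rewrite bc0 ?addr0.
Qed.
Lemma bp1 (C : numClosedFieldType) : (bpoly 1 : {poly C}) = 'X + 2%:P.
Proof. apply/polyP => j; rewrite coef_bpoly coefD coefX coefC; case: j => [|[|j]] /=.
- rewrite /bc /=; have -> : (2*1-0)`! = 2%N by []. 
  have -> : (1-0)`! = 1%N by []. by rewrite fact0; field; nzs.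
- rewrite /bc /=; have -> : (2*1-1)`! = 1%N by []. 
  have -> : (1-1)`! = 1%N by []. by field; nzs.
by rewrite bc0 ?addr0.
Qed.
Lemma rp0 (C : numClosedFieldType) : (rp 0 : {poly C}) = 1.
Proof. apply/polyP => j; rewrite coef_rp coef1; case: j => [|j] /=.
  by rewrite /rc /= !fact0; field; nzs.
by rewrite rc0 ?addr0.
Qed.
Lemma rp1 (C : numClosedFieldType) : (rp 1 : {poly C}) = 'X + 4%:P.
Proof. apply/polyP => j; rewrite coef_rp coefD coefX coefC; case: j => [|[|j]] /=.
- rewrite /rc /=; have -> : (2*1-2*0)`! = 2%N by []. 
  have -> : (1-0)`! = 1%N by []. by rewrite fact0; field; nzs.
- rewrite /rc /=; have -> : (2*1-2*1)`! = 1%N by []. have -> : (2*1-1)`! = 1%N by []. 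
  by field; nzs.
by rewrite rc0 ?addr0.
Qed.

Lemma prod_all (C : numClosedFieldType) (s : C) n :
  let u k := (bpoly k).[s] in let v k := (bpoly k).[-s] in let y := - s ^+ 2 in
  [/\ u n * v n = (rp n).[y], u n.+1 * v n.+1 = (rp n.+1).[y]
    & u n.+1 * v n + u n * v n.+1 = 4 * ((rp n.+1)^`()).[y]].
Proof.
move=> u v y; elim: n => [|n [H0 H1 H2]].
  rewrite /u /v bp0 bp1 rp0 rp1 -polyC1 derivD derivX derivC addr0 !(hornerD, hornerX, hornerC, hornerM) /y; split; ring.
have ur : u n.+2 = (2*(2*n+3))%:R * u n.+1 + s^+2 * u n.
  by rewrite /u bpoly_rec !hornerE.
have vr : v n.+2 = (2*(2*n+3))%:R * v n.+1 + s^+2 * v n.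
  by rewrite /v bpoly_rec !hornerE sqrrN.
have H2' : ((rp n.+1)^`()).[y] = (u n.+1 * v n + u n * v n.+1) / 4.
  by rewrite H2; field; nzs.
split => //.
- rewrite rp_rec !(hornerD, hornerN, hornerZ, hornerM, hornerX, hornerXn) H2' -H0 -H1 ur vr /y; field; nzs.
- rewrite rp_derivrec !(hornerD, hornerN, hornerZ, hornerM, hornerX) H2' -H1 ur vr /y; field; nzs.
Qed.
Lemma ffact_nat (C : numClosedFieldType) (m k : nat) : (k <= m)%N ->
  Defs.ffact (m%:R : C) k * (m - k)`!%:R = m`!%:R.
Proof.
elim: k => [|k IH] hk.
  by rewrite /Defs.ffact big_ord0 mul1r subn0.
rewrite /Defs.ffact big_ord_recr /= -/(Defs.ffact _ _).
rewrite -natrB; last lia.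
have e : (m - k = (m - k.+1).+1)%N by lia.
rewrite -IH; last lia.
by rewrite e factS natrM !mulrA -e.
Qed.

Lemma besselB_bpoly (C : numClosedFieldType) n (s : C) :
  besselB n s 2%:R 1 = (bpoly n).[s].
Proof.
rewrite /besselB horner_poly [RHS](reindex_inj rev_ord_inj) /=.
apply: eq_bigr => k _; rewrite subSS expr1n divr1; congr (_ * _).
have hk : (k <= n)%N by rewrite -ltnS.
rewrite (bcE (k:=k)); last lia.
rewrite addrK -natrD.
have -> : (n - k + 2 * k = n + k)%N by lia.
have hf := ffact_nat C (m:=n+k) (k:=k) (leq_addl _ _).
have e2 : (n + k - k = n)%N by lia. rewrite e2 in hf.
have hb := bin_fact hk.
have eF : Defs.ffact ((n+k)%:R : C) k = (n+k)`!%:R / n`!%:R.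
  by rewrite -hf; field; nzs.
have hC : ('C(n,k)%:R : C) != 0 by rewrite pnatr_eq0 -lt0n bin_gt0.
by rewrite eF -hb !natrM; field; nzs.
Qed.

Lemma bc_conj (C : numClosedFieldType) n i : (bc n i : C)^* = bc n i.
Proof.
rewrite /bc; case: ifP => _; last by rewrite rmorph0.
by rewrite fmorph_div rmorphM /= !conjC_nat.
Qed.

Lemma bpoly_conj (C : numClosedFieldType) n (z : C) : ((bpoly n).[z])^* = (bpoly n).[z^*].
Proof.
rewrite !horner_poly rmorph_sum /=; apply: eq_bigr => i _.
by rewrite rmorphM rmorphXn /= bc_conj.
Qed.

Lemma norm_bpoly (C : numClosedFieldType) n (a : C) : a \is Num.real ->
  `|(bpoly n).['i * a]| ^+ 2 = (rp n).[a ^+ 2].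
Proof.
move=> ha; rewrite normCK bpoly_conj rmorphM /= conjCi (conj_Creal ha).
have [H _ _] := prod_all ('i * a) n.
rewrite mulNr H; congr (_.[_]).
by rewrite exprMn sqrCi mulN1r opprK.
Qed.

Lemma rp_sum (C : numClosedFieldType) m (a : C) :
  \sum_(i < m.+1) 'C(m, i)%:R * ((2 * i)`!%:R / i`!%:R) * (m + i)`!%:R * a ^+ (2 * (m - i))
  = m`!%:R * (rp m).[a ^+ 2].
Proof.
rewrite horner_poly [in RHS](reindex_inj rev_ord_inj) /= mulr_sumr.
apply: eq_bigr => k _; rewrite subSS -exprM.
have hk : (k <= m)%N by rewrite -ltnS.
rewrite (rcE (k:=k)); last lia.
have -> : (m - k + 2 * k = m + k)%N by lia.
have hb := bin_fact hk.
have hC : ('C(m,k)%:R : C) != 0 by rewrite pnatr_eq0 -lt0n bin_gt0.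
rewrite -hb !natrM; field; nzs.
Qed.

Lemma bpoly0 (C : numClosedFieldType) n : (bpoly n).[0] = ((2*n)`!%:R / n`!%:R : C).
Proof.
rewrite horner_coef0 coef_bpoly (bcE (k:=n)) // add0n fact0; field; nzs.
Qed.

Theorem mainTheorem6 (C : numClosedFieldType) (m n : nat) (gamma omega : C) :
  (m < n)%N -> gamma \is Num.real -> omega \is Num.real ->
  `|budakG gamma m n ('i * omega)| ^+ 2 =
    ((2 * n)`!%:R / (2 * m)`!%:R) ^+ 2 * (m`!%:R / n`!%:R) *
    ((\sum_(i < m.+1) 'C(m, i)%:R * ((2 * i)`!%:R / i`!%:R) * (m + i)`!%:R
                        * (2%:R * (gamma - 1) * omega) ^+ (2 * (m - i)))
     / (\sum_(k < n.+1) 'C(n, k)%:R * ((2 * k)`!%:R / k`!%:R) * (n + k)`!%:R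
                        * (2%:R * gamma * omega) ^+ (2 * (n - k)))).
Proof.
move=> _ hg ho.
rewrite /budakG !besselB_bpoly !bpoly0 !rp_sum.
have -> : 2%:R * (gamma - 1) * ('i * omega) = 'i * (2%:R * (gamma - 1) * omega) by ring.
have -> : 2%:R * gamma * ('i * omega) = 'i * (2%:R * gamma * omega) by ring.
have ra : 2%:R * (gamma - 1) * omega \is Num.real by rewrite !rpredM ?rpredB ?rpred1 ?realn.
have rb : 2%:R * gamma * omega \is Num.real by rewrite !rpredM ?realn.
rewrite normrM !normf_div !normr_nat exprMn !expr_div_n !norm_bpoly //.
set Rm := (rp m).[_]; set Rn := (rp n).[_].
have [->|hRn] := eqVneq Rn 0; first by rewrite !(mulr0, invr0).
field; nzs.
Qed.
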